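(* Let $H$ be a Hopf algebra with invertible antipode $S$ and let $B=A^{coH}\subseteq A$ be an $H$-Hopf–Galois extension with translation map $\tau$. Define the left coaction ${}^A\delta:A\to H\otimes A$, ${}^A\delta(a)=S^{-1}(a_{(1)})\otimes a_{(0)}$, and $$A^H\square{}^HA:=\ker(\delta^A\otimes\mathrm{id}_A-\mathrm{id}_A\otimes{}^A\delta)=\{\textstyle\sum a\otimes\tilde a\in A\otimes A:\ \sum a_{(0)}\otimes a_{(1)}\otimes\tilde a=\sum a\otimes S^{-1}(\tilde a_{(1)})\otimes\tilde a_{(0)}\}.$$ Then $A^H\square{}^HA$ coincides with $(A\otimes A)^{coH}=\{X\in A\otimes A:\delta^{A\otimes A}(X)=X\otimes 1_H\}$, where $\delta^{A\otimes A}(a\otimes\tilde a)=a_{(0)}\otimes\tilde a_{(0)}\otimes a_{(1)}\tilde a_{(1)}$, and with $\mathcal{C}:=\{\sum a\otimes\tilde a\in A\otimes A:\ \sum a_{(0)}\otimes a_{(1)}^{\langle 1\rangle}\otimes_B a_{(1)}^{\langle 2\rangle}\tilde a=\sum a\otimes\tilde a\otimes_B 1_A\}$.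
   Context: All algebras are unital and associative over $\mathbb{C}$; Sweedler notation with implicit summation is used. $A$ is a right $H$-comodule algebra with coaction $\delta^A(a)=a_{(0)}\otimes a_{(1)}$, $B=A^{coH}=\{b\in A:\delta^A(b)=b\otimes 1_H\}$. The extension is $H$-Hopf–Galois if $\chi:A\otimes_B A\to A\otimes H$, $a'\otimes_B a\mapsto a'a_{(0)}\otimes a_{(1)}$, is bijective; the translation map is $\tau(h)=\chi^{-1}(1_A\otimes h)=:h^{\langle 1\rangle}\otimes_B h^{\langle 2\rangle}$. *)

(* Defs.v *)
(* Tensor products of (possibly infinite-dimensional)
   vector spaces are not in the library: we axiomatise them by their
   universal property (a record of data + laws, quantified over in the
   theorem), and derive all induced maps (f (x) g, associators, the
   multiplication of tensor product algebras, ...) from the lifting map. *)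
From HB Require Import structures.
From mathcomp Require Import all_boot all_algebra.
Set Implicit Arguments. Unset Strict Implicit. Unset Printing Implicit Defensive.
Import GRing.Theory.
Local Open Scope ring_scope.

Section Tensor.
Variable F : fieldType.

Definition lin (U V : lmodType F) (f : U -> V) :=
  forall (a : F) (u v : U), f (a *: u + v) = a *: f u + f v.
Definition bilin (U V W : lmodType F) (f : U -> V -> W) :=
  (forall v, lin (fun u => f u v)) /\ (forall u, lin (f u)).

(* A tensor product of U and V, "relative to" an extra condition P on the
   bilinear maps (P = True: tensor product over F; P = B-balanced: the
   tensor product over a subalgebra B).  [tcarrier T] is the universal
   object: [tens] is bilinear and satisfies P, every bilinear map satisfying
   P factors (via [tlift]) through a linear map, and linear maps agreeing on
   the elementary tensors are equal. *)
Record tensor_with (U V : lmodType F)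
    (P : forall W : lmodType F, (U -> V -> W) -> Prop) := TensorWith {
  tcarrier : lmodType F;
  tens : U -> V -> tcarrier;
  tens_bilin : bilin tens;
  tens_P : P tcarrier tens;
  tlift : forall W : lmodType F, (U -> V -> W) -> tcarrier -> W;
  tlift_lin : forall (W : lmodType F) (f : U -> V -> W),
      bilin f -> P W f -> lin (tlift f);
  tliftE : forall (W : lmodType F) (f : U -> V -> W),
      bilin f -> P W f -> forall u v, tlift f (tens u v) = f u v;
  tens_ext : forall (W : lmodType F) (g h : tcarrier -> W), lin g -> lin h ->
      (forall u v, g (tens u v) = h (tens u v)) -> forall x, g x = h x
}.


Arguments tcarrier {U V P} t : rename.
Arguments tens {U V P} t : rename.
Arguments tlift {U V P} t {W} f : rename.
Definition no_cond (U V : lmodType F) : forall W : lmodType F, (U -> V -> W) -> Prop :=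
  fun _ _ => True.

Definition tensor (U V : lmodType F) := tensor_with (@no_cond U V).

Definition tmap (U V U' V' : lmodType F) P (T : tensor_with (U:=U) (V:=V) P)
    (T' : tensor U' V') (f : U -> U') (g : V -> V') : tcarrier T -> tcarrier T' :=
  tlift T (fun u v => tens T' (f u) (g v)).

Definition tassoc (U V W : lmodType F) (T1 : tensor U V) (T12 : tensor (tcarrier T1) W)
    (T2 : tensor V W) (T23 : tensor U (tcarrier T2)) : tcarrier T12 -> tcarrier T23 :=
  tlift T12 (fun x w => tlift T1 (fun u v => tens T23 u (tens T2 v w)) x).


Arguments tmap {U V U' V' P} T T' f g.
Arguments tassoc {U V W} T1 T12 T2 T23.

Definition tmul (U V : algType F) (T : tensor U V) (x y : tcarrier T) : tcarrier T :=
  tlift T (fun u v => tlift T (fun u' v' => tens T (u * u') (v * v')) y) x.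

(* (H, Delta, eps, S) is a Hopf algebra; HH = H (x) H, and HH_H, H_HH are
   the two bracketings of H (x) H (x) H. *)
Definition is_hopf (H : algType F) (HH : tensor H H)
    (HH_H : tensor (tcarrier HH) H) (H_HH : tensor H (tcarrier HH))
    (Delta : H -> tcarrier HH) (eps : H -> F) (S : H -> H) : Prop :=
  [/\ lin Delta,
      (forall h h', Delta (h * h') = tmul (Delta h) (Delta h')) &
      Delta 1 = tens HH 1 1] /\
  (forall h, tassoc HH HH_H HH H_HH (tmap HH HH_H Delta id (Delta h))
             = tmap HH H_HH id Delta (Delta h)) /\
  [/\ (forall a h h', eps (a *: h + h') = a * eps h + eps h'),
      (forall h h', eps (h * h') = eps h * eps h') &
      eps 1 = 1] /\
  (forall h, tlift HH (fun h1 h2 => eps h1 *: h2) (Delta h) = h) /\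
  (forall h, tlift HH (fun h1 h2 => eps h2 *: h1) (Delta h) = h) /\
  [/\ lin S,
      (forall h, tlift HH (fun h1 h2 => S h1 * h2) (Delta h) = eps h *: 1) &
      (forall h, tlift HH (fun h1 h2 => h1 * S h2) (Delta h) = eps h *: 1)].

(* (A, delta) is a right H-comodule algebra; AH = A (x) H, and AH_H, A_HH
   are the two bracketings of A (x) H (x) H. *)
Definition is_comod_alg (H A : algType F) (HH : tensor H H) (Delta : H -> tcarrier HH)
    (eps : H -> F) (AH : tensor A H)
    (AH_H : tensor (tcarrier AH) H) (A_HH : tensor A (tcarrier HH))
    (delta : A -> tcarrier AH) : Prop :=
  [/\ lin delta,
      (forall a, tassoc AH AH_H HH A_HH (tmap AH AH_H delta id (delta a))
                 = tmap AH A_HH id Delta (delta a)),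
      (forall a, tlift AH (fun a0 h => eps h *: a0) (delta a) = a),
      (forall a a', delta (a * a') = tmul (delta a) (delta a')) &
      delta 1 = tens AH 1 1].

Definition coinv (H A : algType F) (AH : tensor A H) (delta : A -> tcarrier AH) (b : A) :=
  delta b = tens AH b 1.

(* B-balanced maps, B = A^{coH}: the defining condition of A (x)_B A *)
Definition balanced (H A : algType F) (AH : tensor A H) (delta : A -> tcarrier AH)
  : forall W : lmodType F, (A -> A -> W) -> Prop :=
  fun W f => forall a b a', coinv delta b -> f (a * b) a' = f a (b * a').

Definition galois_map (H A : algType F) (AH : tensor A H) (delta : A -> tcarrier AH)
    (ABA : tensor_with (balanced delta)) : tcarrier ABA -> tcarrier AH :=
  tlift ABA (fun a' a => tmul (tens AH a' 1) (delta a)).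

Definition rmulB (H A : algType F) (AH : tensor A H) (delta : A -> tcarrier AH)
    (ABA : tensor_with (balanced delta)) (c : A) : tcarrier ABA -> tcarrier ABA :=
  tlift ABA (fun x y => tens ABA x (y * c)).



Arguments galois_map {H A AH delta} ABA _.
Arguments rmulB {H A AH delta} ABA c _.

Definition transl (H A : algType F) (AH : tensor A H) (delta : A -> tcarrier AH)
    (ABA : tensor_with (balanced delta)) (chiinv : tcarrier AH -> tcarrier ABA)
    (h : H) : tcarrier ABA :=
  chiinv (tens AH 1 h).


Arguments transl {H A AH delta} ABA chiinv h.

Definition lcoact (H A : algType F) (AH : tensor A H) (delta : A -> tcarrier AH)
    (HA : tensor H A) (Sinv : H -> H) (a : A) : tcarrier HA :=
  tlift AH (fun a0 h => tens HA (Sinv h) a0) (delta a).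

(* A^H box ^H A = ker(delta (x) id - id (x) ldelta), both sides viewed in
   A (x) H (x) A (bracketed as A (x) (H (x) A) via the associator) *)
Definition cotensor (H A : algType F) (AH : tensor A H) (delta : A -> tcarrier AH)
    (HA : tensor H A) (Sinv : H -> H) (AA : tensor A A)
    (AH_A : tensor (tcarrier AH) A) (A_HA : tensor A (tcarrier HA))
    (X : tcarrier AA) : Prop :=
  tassoc AH AH_A HA A_HA (tmap AA AH_A delta id X)
  = tmap AA A_HA id (lcoact delta HA Sinv) X.

Definition coact_AA (H A : algType F) (AH : tensor A H) (delta : A -> tcarrier AH)
    (AA : tensor A A) (AA_H : tensor (tcarrier AA) H) : tcarrier AA -> tcarrier AA_H :=
  tlift AA (fun a a' =>
    tlift AH (fun a0 h0 =>
      tlift AH (fun a1 h1 => tens AA_H (tens AA a0 a1) (h0 * h1)) (delta a'))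
    (delta a)).

Definition coinvAA (H A : algType F) (AH : tensor A H) (delta : A -> tcarrier AH)
    (AA : tensor A A) (AA_H : tensor (tcarrier AA) H) (X : tcarrier AA) : Prop :=
  coact_AA delta AA_H X = tens AA_H X 1.

Definition galoisC (H A : algType F) (AH : tensor A H) (delta : A -> tcarrier AH)
    (ABA : tensor_with (balanced delta)) (chiinv : tcarrier AH -> tcarrier ABA)
    (AA : tensor A A) (A_ABA : tensor A (tcarrier ABA)) (X : tcarrier AA) : Prop :=
  tlift AA (fun a a' =>
    tlift AH (fun a0 h => tens A_ABA a0 (rmulB ABA a' (transl ABA chiinv h)))
      (delta a)) X
  = tmap AA A_ABA id (fun a' => tens ABA a' 1) X.

End Tensor.

Arguments tcarrier {F U V P} t : rename.
Arguments tens {F U V P} t : rename.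
Arguments tlift {F U V P} t {W} f : rename.
Arguments tmap {F U V U' V' P} T T' f g.
Arguments tassoc {F U V W} T1 T12 T2 T23.
Arguments galois_map {F H A AH delta} ABA _.
Arguments rmulB {F H A AH delta} ABA c _.
Arguments transl {F H A AH delta} ABA chiinv h.

(* Main.v *)
Require Import Defs.
From HB Require Import structures.
From mathcomp Require Import all_boot all_algebra.
From Stdlib Require Import FunctionalExtensionality.
Set Implicit Arguments. Unset Strict Implicit. Unset Printing Implicit Defensive.
Import GRing.Theory.
Local Open Scope ring_scope.


Section L.
Variable F : fieldType.

Lemma lin0 (U W : lmodType F) (f : U -> W) : lin f -> f 0 = 0.
Proof. move=> h; have e := h 1 0 0; rewrite !scale1r !addr0 in e.
by apply: (addrI (f 0)); rewrite addr0 -e. Qed.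
Lemma linD (U W : lmodType F) (f : U -> W) u v : lin f -> f (u + v) = f u + f v.
Proof. by move=> h; have := h 1 u v; rewrite !scale1r. Qed.
Lemma linZ (U W : lmodType F) (f : U -> W) a u : lin f -> f (a *: u) = a *: f u.
Proof. by move=> h; have := h a u 0; rewrite !addr0 (lin0 h) addr0. Qed.

Lemma lin_id (U : lmodType F) : lin (fun x : U => x). Proof. by []. Qed.
Lemma lin_comp (U V W : lmodType F) (a : U -> V) (g : V -> W) :
  lin g -> lin a -> lin (fun x => g (a x)).
Proof. by move=> hg ha c u v; rewrite ha hg. Qed.
Lemma lin_add (U W : lmodType F) (a b : U -> W) :
  lin a -> lin b -> lin (fun x => a x + b x).
Proof. by move=> ha hb c u v; rewrite ha hb scalerDr addrACA. Qed.
Lemma lin_scale (U W : lmodType F) c (a : U -> W) : lin a -> lin (fun x => c *: a x).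
Proof. by move=> ha d u v; rewrite ha scalerDr !scalerA mulrC. Qed.
Lemma lin_zero (U W : lmodType F) : lin (fun _ : U => (0 : W)).
Proof. by move=> *; rewrite scaler0 addr0. Qed.
Definition slin (U : lmodType F) (e : U -> F) :=
  forall a u v, e (a *: u + v) = a * e u + e v.
Lemma lin_scalel (U V W : lmodType F) (e : V -> F) (w : W) (a : U -> V) :
  slin e -> lin a -> lin (fun x => e (a x) *: w).
Proof. by move=> he ha c u v; rewrite ha he scalerDl scalerA. Qed.
Lemma lin_mulr (A : algType F) (c : A) : lin (fun x => x * c).
Proof. by move=> a u v; rewrite mulrDl scalerAl. Qed.
Lemma lin_mull (A : algType F) (c : A) : lin ( *%R c).
Proof. by move=> a u v; rewrite /= mulrDr scalerAr. Qed.
Lemma lin_mulr_comp (U : lmodType F) (A : algType F) (c : A) (a : U -> A) :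
  lin a -> lin (fun x => a x * c).
Proof. by move=> h; apply: (lin_comp (g := fun y => y * c)) => //; apply: lin_mulr. Qed.

Section T.
Variables (U V : lmodType F) (P : forall W : lmodType F, (U -> V -> W) -> Prop).
Variable T : tensor_with P.

Lemma lin_tens_l v : lin (fun u => tens T u v).
Proof. by case: (tens_bilin T). Qed.
Lemma lin_tens_r u : lin (tens T u).
Proof. by case: (tens_bilin T). Qed.
Lemma lin_tens_l_comp (Y : lmodType F) v (a : Y -> U) : lin a -> lin (fun x => tens T (a x) v).
Proof. by move=> h; apply: (lin_comp (g := fun u => tens T u v)) => //; apply: lin_tens_l. Qed.

Lemma lin_tlift_comp (Y W : lmodType F) (f : U -> V -> W) (z : Y -> tcarrier T) :
  bilin f -> @P W f -> lin z -> lin (fun x => tlift T f (z x)).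
Proof. by move=> hf hp hz; apply: lin_comp => //; apply: tlift_lin. Qed.

Lemma tliftE' (W : lmodType F) (f : U -> V -> W) u v :
  bilin f -> @P W f -> tlift T f (tens T u v) = f u v.
Proof. by move=> hf hp; apply: tliftE. Qed.

Lemma tpush (W W' : lmodType F) (g : W -> W') (f : U -> V -> W) :
  lin g -> bilin f -> @P W f -> bilin (fun u v => g (f u v)) -> @P W' (fun u v => g (f u v)) ->
  forall x, g (tlift T f x) = tlift T (fun u v => g (f u v)) x.
Proof.
move=> hg hf hp hgf hgp; apply: tens_ext.
- by apply: lin_comp => //; apply: tlift_lin.
- by apply: tlift_lin.
by move=> u v; rewrite !tliftE.
Qed.

Lemma tlift_param (Y W : lmodType F) (f : Y -> U -> V -> W) x :
  (forall p, bilin (f p)) -> (forall p, @P W (f p)) -> (forall u v, lin (fun p => f p u v)) ->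
  lin (fun p => tlift T (f p) x).
Proof.
move=> hb hp hl c p q; move: x; apply: tens_ext.
- exact: tlift_lin.
- by apply: lin_add; [apply: lin_scale|]; apply: tlift_lin.
by move=> u v; rewrite !tliftE // hl.
Qed.
End T.

Lemma tlift_ext (U V W : lmodType F) P (T : tensor_with (U:=U) (V:=V) P) (f g : U -> V -> W) x :
  (forall u v, f u v = g u v) -> tlift T f x = tlift T g x.
Proof. move=> e; have -> // : f = g. by apply: functional_extensionality => u; apply: functional_extensionality. Qed.

Lemma tcomp (U1 V1 U2 V2 W : lmodType F) P1 P2
  (T1 : tensor_with (U:=U1) (V:=V1) P1) (T2 : tensor_with (U:=U2) (V:=V2) P2)
  (f1 : U1 -> V1 -> W) (f2 : U2 -> V2 -> tcarrier T1) x :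
  bilin f1 -> @P1 W f1 -> bilin f2 -> @P2 _ f2 ->
  bilin (fun u v => tlift T1 f1 (f2 u v)) -> @P2 W (fun u v => tlift T1 f1 (f2 u v)) ->
  tlift T1 f1 (tlift T2 f2 x) = tlift T2 (fun u v => tlift T1 f1 (f2 u v)) x.
Proof. by move=> *; apply: tpush => //; apply: tlift_lin. Qed.

Lemma tmulpush_l (U V : lmodType F) (A : algType F) (T : tensor U V) (c : A) (f : U -> V -> A) x :
  bilin f -> c * tlift T f x = tlift T (fun u v => c * f u v) x.
Proof.
move=> hf; apply: (tpush (g := *%R c)) => //; first exact: lin_mull.
case: hf => h1 h2; split=> [v|u]; apply: (lin_comp (g := *%R c)) => //; exact: lin_mull.
Qed.
Lemma tmulpush_r (U V : lmodType F) (A : algType F) (T : tensor U V) (c : A) (f : U -> V -> A) x :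
  bilin f -> tlift T f x * c = tlift T (fun u v => f u v * c) x.
Proof.
move=> hf; apply: (tpush (g := fun y => y * c)) => //; first exact: lin_mulr.
case: hf => h1 h2; split=> [v|u]; apply: (lin_comp (g := fun y => y * c)) => //; exact: lin_mulr.
Qed.
Lemma tscalepush (U V W : lmodType F) (T : tensor U V) (c : F) (f : U -> V -> W) x :
  bilin f -> c *: tlift T f x = tlift T (fun u v => c *: f u v) x.
Proof.
move=> hf; apply: (tpush (g := fun y => c *: y)) => //; first exact: lin_scale.
case: hf => h1 h2; split=> [v|u]; apply: (lin_comp (g := fun y => c *: y)) => //; exact: lin_scale.
Qed.
End L.

Ltac lin_hook := fail.
Ltac solve_lin :=
  let rec go :=
  cbv beta;
  lazymatch goal with
  | |- _ = _ => fail
  | |- lin _ => lin_go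
  | |- bilin _ => split; go
  | |- forall _, _ => intro; go
  | |- no_cond _ _ => exact I
  | |- True => exact I
  | |- slin _ => assumption
  | |- _ => first [assumption | exact I | match goal with h : ?T |- _ =>
       lazymatch T with context [balanced] => solve [apply h] end end]
  end
  with lin_go := first
     [ assumption
     | match goal with h : ?T |- _ =>
       lazymatch T with context [@lin] => solve [apply h] end end
     | exact: lin_id
     | exact: lin_zero
     | exact: lin_tens_r
     | exact: lin_mull
     | exact: lin_mulr
     | lin_hook
     | match goal with
       | |- lin (tlift _ _) => eapply tlift_lin; go
       | |- lin (fun x => tens _ (@?a x) _) => eapply lin_tens_l_comp; go
       | |- lin (fun x => tlift _ _ (@?z x)) => eapply lin_tlift_comp; go
       | |- lin (fun x => tlift _ (@?f x) _) => eapply tlift_param; go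
       | |- lin (fun x => @?a x + @?b x) => eapply lin_add; go
       | |- lin (fun x => _ *: @?a x) => eapply lin_scale; go
       | |- lin (fun x => ?e (@?a x) *: ?w) => eapply (@lin_scalel _ _ _ _ e w a); go
       | |- lin (fun x => @?a x * _) => eapply lin_mulr_comp; go
       | |- lin (fun x => ?g (@?a x)) => eapply (@lin_comp _ _ _ _ a g); go
       | |- lin (fun x => ?g (@?a x) ?y) => eapply (@lin_comp _ _ _ _ a (fun z => g z y)); go
       | |- lin (fun x => ?g (@?a x) ?y ?y') => eapply (@lin_comp _ _ _ _ a (fun z => g z y y')); go
       end ] in go.

Ltac tE := rewrite tliftE; try solve_lin.
Ltac tEs := repeat (rewrite tliftE; try solve_lin).


Ltac tC := rewrite tcomp; try solve_lin.
Ltac tU := under tlift_ext => ? ? do tEs.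

Section L3.
Variable F : fieldType.
Section TM.
Variables (U V : algType F) (T : tensor U V).
Lemma tmul_linl (y : tcarrier T) : lin (fun x => tmul x y).
Proof. rewrite /tmul; solve_lin. Qed.
Lemma tmul_linr (x : tcarrier T) : lin (tmul x).
Proof. rewrite /tmul; solve_lin. Qed.
End TM.
End L3.
Ltac lin_hook ::= first [exact: tmul_linl | exact: tmul_linr].

Section L2.
Variable F : fieldType.
Lemma tswap (U1 V1 U2 V2 W : lmodType F) (T1 : tensor U1 V1) (T2 : tensor U2 V2)
  (psi : U1 -> V1 -> U2 -> V2 -> W) x y :
  (forall v u' v', lin (fun u => psi u v u' v')) -> (forall u u' v', lin (fun v => psi u v u' v')) ->
  (forall u v v', lin (fun u' => psi u v u' v')) -> (forall u v u', lin (psi u v u')) ->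
  tlift T1 (fun u v => tlift T2 (psi u v) y) x
  = tlift T2 (fun u' v' => tlift T1 (fun u v => psi u v u' v') x) y.
Proof.
move=> l1 l2 l3 l4; move: x; apply: tens_ext; try solve_lin.
move=> u v; tEs; apply: tlift_ext => a b; by tEs.
Qed.

End L2.

Section TM2.
Variable F : fieldType.
Variables (U V : algType F) (T : tensor U V).
Lemma tmul_tl a b (y : tcarrier T) :
  tmul (tens T a b) y = tlift T (fun u v => tens T (a * u) (b * v)) y.
Proof. by rewrite /tmul; tEs. Qed.
Lemma tmul_tt a b c d : tmul (tens T a b) (tens T c d) = tens T (a * c) (b * d).
Proof. by rewrite tmul_tl; tEs. Qed.
Lemma tmulA (x y z : tcarrier T) : tmul (tmul x y) z = tmul x (tmul y z).
Proof.
move: x; apply: tens_ext; try solve_lin.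
move=> a b; rewrite tmul_tl tmul_tl.
move: y; apply: tens_ext; try solve_lin.
move=> c d; tEs; rewrite tmul_tl tmul_tl; tC.
by apply: tlift_ext => u v; tEs; rewrite !mulrA.
Qed.
End TM2.


Section Hopf.
Variable F : fieldType.
Variables (H : algType F) (HH : tensor H H) (HH_H : tensor (tcarrier HH) H)
  (H_HH : tensor H (tcarrier HH)) (Delta : H -> tcarrier HH) (eps : H -> F) (S Sinv : H -> H).
Hypothesis hopf : is_hopf HH_H H_HH Delta eps S.
Hypotheses (SK : cancel S Sinv) (SinvK : cancel Sinv S).

Lemma Dlin : lin Delta. Proof. by case: hopf => -[]. Qed.
Lemma Dmul h h' : Delta (h * h') = tmul (Delta h) (Delta h'). Proof. by case: hopf => -[]. Qed.
Lemma D1 : Delta 1 = tens HH 1 1. Proof. by case: hopf => -[]. Qed.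
Lemma coass h : tassoc HH HH_H HH H_HH (tmap HH HH_H Delta id (Delta h))
             = tmap HH H_HH id Delta (Delta h). Proof. by case: hopf => _ []. Qed.
Lemma eslin : slin eps. Proof. by case: hopf => _ [_ [[]]]. Qed.
Lemma emul h h' : eps (h * h') = eps h * eps h'. Proof. by case: hopf => _ [_ [[]]]. Qed.
Lemma e1 : eps 1 = 1. Proof. by case: hopf => _ [_ [[]]]. Qed.
Lemma cl h : tlift HH (fun h1 h2 => eps h1 *: h2) (Delta h) = h. Proof. by case: hopf => _ [_ [_ []]]. Qed.
Lemma cr h : tlift HH (fun h1 h2 => eps h2 *: h1) (Delta h) = h. Proof. by case: hopf => _ [_ [_ [_ []]]]. Qed.
Lemma Slin : lin S. Proof. by case: hopf => _ [_ [_ [_ [_ []]]]]. Qed.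
Lemma antiL h : tlift HH (fun h1 h2 => S h1 * h2) (Delta h) = eps h *: 1.
Proof. by case: hopf => _ [_ [_ [_ [_ []]]]]. Qed.
Lemma antiR h : tlift HH (fun h1 h2 => h1 * S h2) (Delta h) = eps h *: 1.
Proof. by case: hopf => _ [_ [_ [_ [_ []]]]]. Qed.

Local Hint Resolve Dlin eslin Slin : core.

Lemma coassD (W : lmodType F) (phi : H -> H -> H -> W) :
  (forall y z, lin (fun x => phi x y z)) -> (forall x z, lin (fun y => phi x y z)) ->
  (forall x y, lin (phi x y)) -> forall h,
  tlift HH (fun x y => tlift HH (fun x1 x2 => phi x1 x2 y) (Delta x)) (Delta h)
  = tlift HH (fun x y => tlift HH (fun y1 y2 => phi x y1 y2) (Delta y)) (Delta h).
Proof.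
move=> l1 l2 l3 h; have Dl := Dlin.
have := congr1 (tlift H_HH (fun x y => tlift HH (fun y1 y2 => phi x y1 y2) y)) (coass h).
rewrite /tassoc /tmap.
move: (Delta h) => z.
set L := tlift H_HH _.
have EL : forall z, L (tlift HH_H (fun x w => tlift HH (fun u v => tens H_HH u (tens HH v w)) x)
            (tlift HH (fun u v => tens HH_H (Delta u) (id v)) z))
   = tlift HH (fun x y => tlift HH (fun x1 x2 => phi x1 x2 y) (Delta x)) z.
  apply: tens_ext; rewrite /L; try solve_lin.
  by move=> u v; tEs; tC; tU.
have ER : forall z, L (tlift HH (fun u v => tens H_HH u (Delta v)) z) =
   tlift HH (fun x y => tlift HH (fun y1 y2 => phi x y1 y2) (Delta y)) z.
  apply: tens_ext; rewrite /L; try solve_lin.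
  by move=> u v; tEs.
by move=> E; rewrite -EL -ER E.
Qed.
End Hopf.

Section Conv.
Variable F : fieldType.
Variables (H : algType F) (HH : tensor H H) (HH_H : tensor (tcarrier HH) H)
  (H_HH : tensor H (tcarrier HH)) (Delta : H -> tcarrier HH) (eps : H -> F) (S : H -> H).
Hypothesis hopf : is_hopf HH_H H_HH Delta eps S.
Let Dl := Dlin hopf.

Definition conv (f k : H -> H -> H) (g h : H) : H :=
  tlift HH (fun g1 g2 => tlift HH (fun h1 h2 => f g1 h1 * k g2 h2) (Delta h)) (Delta g).

Lemma conv_assoc (f m k : H -> H -> H)
  (fl : forall y, lin (fun x => f x y)) (fr : forall x, lin (f x))
  (ml : forall y, lin (fun x => m x y)) (mr : forall x, lin (m x))
  (kl : forall y, lin (fun x => k x y)) (kr : forall x, lin (k x)) g h :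
  conv f (conv m k) g h = conv (conv f m) k g h.
Proof.
rewrite /conv.
set phiL := fun x y z => tlift HH (fun a b => tlift HH (fun a1 a2 => f x a1 * m y a2 * k z b) (Delta a)) (Delta h).
set phiR := fun x y z => tlift HH (fun a b => tlift HH (fun b1 b2 => f x a * (m y b1 * k z b2)) (Delta b)) (Delta h).
have eLR : forall x y z, phiL x y z = phiR x y z.
  move=> x y z; rewrite /phiL /phiR (coassD hopf); try solve_lin.
  apply: tlift_ext => a b; apply: tlift_ext => c d; by rewrite mulrA.
transitivity (tlift HH (fun x y => tlift HH (fun y1 y2 => phiR x y1 y2) (Delta y)) (Delta g)).
  apply: tlift_ext => g1 g2; rewrite /phiR.
  rewrite [RHS]tswap; try solve_lin.
  apply: tlift_ext => h1 h2.
  rewrite tmulpush_l; try solve_lin.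
  apply: tlift_ext => a b.
  rewrite tmulpush_l //; solve_lin.
transitivity (tlift HH (fun x y => tlift HH (fun y1 y2 => phiL x y1 y2) (Delta y)) (Delta g)).
  by apply: tlift_ext => x y; apply: tlift_ext => y1 y2; rewrite eLR.
rewrite -(coassD hopf) /phiL; try solve_lin.
apply: tlift_ext => g1 g2; rewrite /phiL.
rewrite [LHS]tswap; try solve_lin.
apply: tlift_ext => h1 h2.
rewrite tmulpush_r; try solve_lin.
apply: tlift_ext => a b.
rewrite tmulpush_r //; solve_lin.
Qed.

Let Sl := Slin hopf.
Let esl := eslin hopf.
Definition ue (x y : H) : H := (eps x * eps y) *: 1.

Lemma conv_unit_l (k : H -> H -> H)
  (kl : forall y, lin (fun x => k x y)) (kr : forall x, lin (k x)) g h :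
  conv ue k g h = k g h.
Proof.
rewrite /conv /ue.
transitivity (tlift HH (fun g1 g2 => eps g1 *: k g2 h) (Delta g)).
  apply: tlift_ext => g1 g2.
  transitivity (eps g1 *: k g2 (tlift HH (fun a b => eps a *: b) (Delta h))); last by rewrite (cl hopf).
  rewrite (tpush (g := k g2)); try solve_lin.
  rewrite tscalepush; try solve_lin.
  apply: tlift_ext => a b.
  by rewrite -scalerAl mul1r -scalerA (linZ _ _ (kr g2)).
transitivity (k (tlift HH (fun a b => eps a *: b) (Delta g)) h); last by rewrite (cl hopf).
rewrite (tpush (g := fun z => k z h)); try solve_lin.
apply: tlift_ext => a b. by rewrite (linZ _ _ (kl h)).
Qed.

Lemma conv_unit_r (k : H -> H -> H)
  (kl : forall y, lin (fun x => k x y)) (kr : forall x, lin (k x)) g h :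
  conv k ue g h = k g h.
Proof.
rewrite /conv /ue.
transitivity (tlift HH (fun g1 g2 => eps g2 *: k g1 h) (Delta g)).
  apply: tlift_ext => g1 g2.
  transitivity (eps g2 *: k g1 (tlift HH (fun a b => eps b *: a) (Delta h))); last by rewrite (cr hopf).
  rewrite (tpush (g := k g1)); try solve_lin.
  rewrite tscalepush; try solve_lin.
  apply: tlift_ext => a b.
  by rewrite -scalerAr mulr1 -scalerA (linZ _ _ (kr g1)).
transitivity (k (tlift HH (fun a b => eps b *: a) (Delta g)) h); last by rewrite (cr hopf).
rewrite (tpush (g := fun z => k z h)); try solve_lin.
apply: tlift_ext => a b. by rewrite (linZ _ _ (kl h)).
Qed.

Lemma conv_Sm g h : conv (fun x y => S (x * y)) ( *%R ) g h = ue g h.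
Proof.
rewrite /ue -(emul hopf) -(antiL hopf) (Dmul hopf) /tmul /conv.
tC. apply: tlift_ext => a b. tC. apply: tlift_ext => c d. by tEs.
Qed.

Lemma conv_mS g h : conv ( *%R ) (fun x y => S y * S x) g h = ue g h.
Proof.
rewrite /conv /ue.
transitivity (tlift HH (fun g1 g2 => eps h *: (g1 * S g2)) (Delta g)).
  apply: tlift_ext => g1 g2.
  have -> : eps h *: (g1 * S g2) = g1 * (tlift HH (fun a b => a * S b) (Delta h)) * S g2.
    by rewrite (antiR hopf) -scalerAr mulr1 -scalerAl.
  rewrite tmulpush_l; try solve_lin. rewrite tmulpush_r; try solve_lin.
  by apply: tlift_ext => a b; rewrite !mulrA.
rewrite -tscalepush; try solve_lin.
by rewrite (antiR hopf) scalerA mulrC.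
Qed.

Lemma S_anti g h : S (g * h) = S h * S g.
Proof.
have lS : forall y, lin (fun x => S (x * y)) by move=> y; solve_lin.
have rS : forall x, lin (fun y => S (x * y)) by move=> x; solve_lin.
rewrite -(conv_unit_r (k := fun x y => S (x * y))) //.
have -> : ue = conv ( *%R ) (fun x y => S y * S x).
  by apply: functional_extensionality => x; apply: functional_extensionality => y; rewrite conv_mS.
rewrite conv_assoc; try solve_lin.
have -> : conv (fun x y => S (x * y)) ( *%R ) = ue.
  by apply: functional_extensionality => x; apply: functional_extensionality => y; rewrite conv_Sm.
rewrite conv_unit_l //; solve_lin.
Qed.

End Conv.

Section Inv.
Variable F : fieldType.
Variables (H : algType F) (HH : tensor H H) (HH_H : tensor (tcarrier HH) H)
  (H_HH : tensor H (tcarrier HH)) (Delta : H -> tcarrier HH) (eps : H -> F) (S Sinv : H -> H).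
Hypothesis hopf : is_hopf HH_H H_HH Delta eps S.
Hypotheses (SK : cancel S Sinv) (SinvK : cancel Sinv S).
Let Dl := Dlin hopf.
Let Sl := Slin hopf.

Lemma S1 : S 1 = 1.
Proof.
have := antiL hopf 1; rewrite (D1 hopf) (e1 hopf) scale1r tliftE; try solve_lin.
by rewrite mulr1.
Qed.

Lemma Sinv_lin : lin Sinv.
Proof. by move=> a u v; apply: (can_inj SK); rewrite SinvK Sl !SinvK. Qed.

Lemma I1 h : tlift HH (fun x y => Sinv y * x) (Delta h) = eps h *: 1.
Proof.
have Si := Sinv_lin.
apply: (can_inj SK).
rewrite (tpush (g := S)); try solve_lin.
rewrite (linZ _ _ Sl) S1 -(antiL hopf).
by apply: tlift_ext => x y; rewrite (S_anti hopf) SinvK.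
Qed.

Lemma I2 h : tlift HH (fun x y => y * Sinv x) (Delta h) = eps h *: 1.
Proof.
have Si := Sinv_lin.
apply: (can_inj SK).
rewrite (tpush (g := S)); try solve_lin.
rewrite (linZ _ _ Sl) S1 -(antiR hopf).
by apply: tlift_ext => x y; rewrite (S_anti hopf) SinvK.
Qed.
End Inv.


Section Main.
Variables (F : fieldType) (H A : algType F)
  (HH : tensor H H) (HH_H : tensor (tcarrier HH) H) (H_HH : tensor H (tcarrier HH))
  (Delta : H -> tcarrier HH) (eps : H -> F) (S Sinv : H -> H).
Hypothesis hopf : is_hopf HH_H H_HH Delta eps S.
Hypotheses (SK : cancel S Sinv) (SinvK : cancel Sinv S).
Variables (AH : tensor A H) (AH_H : tensor (tcarrier AH) H) (A_HH : tensor A (tcarrier HH))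
  (delta : A -> tcarrier AH).
Hypothesis comod : is_comod_alg Delta eps AH_H A_HH delta.
Variables (ABA : tensor_with (balanced delta)) (chiinv : tcarrier AH -> tcarrier ABA).
Hypotheses (chiK : cancel (galois_map ABA) chiinv) (chiinvK : cancel chiinv (galois_map ABA)).
Variables (AA : tensor A A) (HA : tensor H A)
  (AH_A : tensor (tcarrier AH) A) (A_HA : tensor A (tcarrier HA))
  (AA_H : tensor (tcarrier AA) H) (A_ABA : tensor A (tcarrier ABA)).

Let Dl := Dlin hopf.
Let Sl := Slin hopf.
Let esl := eslin hopf.
Let Sil := Sinv_lin hopf SK SinvK.

Lemma dlin : lin delta. Proof. by case: comod. Qed.
Lemma dcoass a : tassoc AH AH_H HH A_HH (tmap AH AH_H delta id (delta a))
                 = tmap AH A_HH id Delta (delta a). Proof. by case: comod. Qed.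
Lemma dcounit a : tlift AH (fun a0 h => eps h *: a0) (delta a) = a. Proof. by case: comod. Qed.
Lemma dmul a a' : delta (a * a') = tmul (delta a) (delta a'). Proof. by case: comod. Qed.
Lemma d1 : delta 1 = tens AH 1 1. Proof. by case: comod. Qed.
Let dl := dlin.

Lemma coassA (W : lmodType F) (phi : A -> H -> H -> W) :
  (forall y z, lin (fun x => phi x y z)) -> (forall x z, lin (fun y => phi x y z)) ->
  (forall x y, lin (phi x y)) -> forall a,
  tlift AH (fun u v => tlift AH (fun u0 h => phi u0 h v) (delta u)) (delta a)
  = tlift AH (fun u v => tlift HH (phi u) (Delta v)) (delta a).
Proof.
move=> l1 l2 l3 a.
have := congr1 (tlift A_HH (fun x y => tlift HH (fun y1 y2 => phi x y1 y2) y)) (dcoass a).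
rewrite /tassoc /tmap.
move: (delta a) => z.
set L := tlift A_HH _.
have EL : forall z, L (tlift AH_H (fun x w => tlift AH (fun u v => tens A_HH u (tens HH v w)) x)
            (tlift AH (fun u v => tens AH_H (delta u) (id v)) z))
   = tlift AH (fun u v => tlift AH (fun u0 h => phi u0 h v) (delta u)) z.
  apply: tens_ext; rewrite /L; try solve_lin.
  by move=> u v; tEs; tC; tU.
have ER : forall z, L (tlift AH (fun u v => tens A_HH u (Delta v)) z) =
   tlift AH (fun u v => tlift HH (phi u) (Delta v)) z.
  apply: tens_ext; rewrite /L; try solve_lin.
  by move=> u v; tEs.
by move=> E; rewrite -EL -ER E.
Qed.


Definition L3 X := tassoc AH AH_A HA A_HA (tmap AA AH_A delta id X).
Definition R3 X := tmap AA A_HA id (lcoact delta HA Sinv) X.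
Definition L2 X := coact_AA delta AA_H X.
Definition R2 X := tens AA_H X 1.
Definition psi := tlift A_HA (fun a y => tlift HA (fun h b =>
   tlift AH (fun b0 h1 => tens AA_H (tens AA a b0) (h * h1)) (delta b)) y).
Definition psi' := tlift AA_H (fun x k => tlift AA (fun a b =>
   tlift AH (fun b0 h1 => tens A_HA a (tens HA (k * Sinv h1) b0)) (delta b)) x).

Ltac unf := rewrite /psi /psi' /L3 /R3 /L2 /R2 /tassoc /tmap /lcoact /coact_AA.

Lemma psi_L3 X : psi (L3 X) = L2 X.
Proof.
move: X; apply: tens_ext; unf; try solve_lin.
move=> a b; tEs. tC. tU. done.
Qed.

Lemma psi_R3 X : psi (R3 X) = R2 X.
Proof.
move: X; apply: tens_ext; unf; try solve_lin.
move=> a b; tEs. tC. tU.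
rewrite (coassA (phi := fun u0 k v => tens AA_H (tens AA a u0) (Sinv v * k))); try solve_lin.
transitivity (tlift AH (fun u v => tens AA_H (tens AA a u) (eps v *: 1)) (delta b)).
  apply: tlift_ext => u v.
  rewrite -(I1 hopf SK SinvK) (tpush (g := tens AA_H (tens AA a u))) //; try solve_lin.
transitivity (tens AA_H (tens AA a (tlift AH (fun u v => eps v *: u) (delta b))) 1); last by rewrite dcounit.
rewrite (tpush (g := fun z => tens AA_H (tens AA a z) 1)); try solve_lin.
apply: tlift_ext => u v.
by rewrite (linZ _ _ (lin_tens_r _ _)) (linZ _ _ (lin_tens_r _ _)) (linZ _ _ (lin_tens_l _ _)).
Qed.


Lemma psi'_R2 X : psi' (R2 X) = R3 X.
Proof.
move: X; apply: tens_ext; unf; try solve_lin.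
move=> a b; tEs.
rewrite (tpush (g := tens A_HA a)); try solve_lin.
by apply: tlift_ext => u v; rewrite mul1r.
Qed.

Lemma psi'_L2 X : psi' (L2 X) = L3 X.
Proof.
move: X; apply: tens_ext; unf; try solve_lin.
move=> a b; tEs. tC. apply: tlift_ext => a0 h0. tC. tU.
rewrite (coassA (phi := fun u0 k v => tens A_HA a0 (tens HA ((h0 * v) * Sinv k) u0))); try solve_lin.
transitivity (tlift AH (fun u v => tens A_HA a0 (tens HA h0 (eps v *: u))) (delta b)).
  apply: tlift_ext => u v.
  transitivity (tens A_HA a0 (tens HA (h0 * tlift HH (fun k1 k2 => k2 * Sinv k1) (Delta v)) u)).
    rewrite (tmulpush_l); try solve_lin.
    rewrite (tpush (g := fun z => tens A_HA a0 (tens HA z u))) //; try solve_lin.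
    by apply: tlift_ext => k1 k2; rewrite mulrA.
  by rewrite (I2 hopf SK SinvK) -scalerAr mulr1 (linZ _ _ (lin_tens_l HA u)) (linZ _ _ (lin_tens_r HA h0)).
by rewrite -(tpush (g := fun z => tens A_HA a0 (tens HA h0 z))) ?dcounit //; solve_lin.
Qed.


Lemma chi_bil : bilin (fun a' a => tmul (tens AH a' 1) (delta a)).
Proof. solve_lin. Qed.
Lemma chi_bal : balanced delta (fun a' a => tmul (tens AH a' 1) (delta a)).
Proof. by move=> a b a' cb /=; rewrite dmul cb -tmulA tmul_tt mulr1. Qed.
Lemma chiE x y : galois_map ABA (tens ABA x y) = tmul (tens AH x 1) (delta y).
Proof. by rewrite /galois_map tliftE //; [exact: chi_bil | exact: chi_bal]. Qed.
Lemma chi_lin : lin (galois_map ABA).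
Proof. apply: tlift_lin; [exact: chi_bil | exact: chi_bal]. Qed.
Lemma chiinv_lin : lin chiinv.
Proof. by move=> c u v; apply: (can_inj chiK); rewrite chiinvK chi_lin !chiinvK. Qed.
Lemma rbil c : bilin (fun x y => tens ABA x (y * c)).
Proof. solve_lin. Qed.
Lemma rbal c : balanced delta (fun x y => tens ABA x (y * c)).
Proof. by move=> a b a' cb /=; rewrite (tens_P ABA) // mulrA. Qed.
Lemma rmulBE c x y : rmulB ABA c (tens ABA x y) = tens ABA x (y * c).
Proof. by rewrite /rmulB tliftE //; [exact: rbil | exact: rbal]. Qed.
Lemma rmulB_lin c : lin (rmulB ABA c).
Proof. apply: tlift_lin; [exact: rbil | exact: rbal]. Qed.
Let rb := rbal.
Lemma rmulB_linc y : lin (fun c => rmulB ABA c y).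
Proof. rewrite /rmulB; solve_lin. Qed.
Let chil := chi_lin.
Let chiil := chiinv_lin.
Let rl := rmulB_lin.
Let rlc := rmulB_linc.
Lemma transl_lin : lin (transl ABA chiinv).
Proof. exact: (lin_comp chiinv_lin (lin_tens_r AH 1)). Qed.
Let tl := transl_lin.
Lemma chi_rmulB c y : galois_map ABA (rmulB ABA c y) = tmul (galois_map ABA y) (delta c).
Proof.
move: y; apply: tens_ext; try solve_lin.
by move=> x y; rewrite rmulBE !chiE dmul tmulA.
Qed.

Definition L1 X := tlift AA (fun a a' => tlift AH (fun a0 h =>
   tens A_ABA a0 (rmulB ABA a' (transl ABA chiinv h))) (delta a)) X.
Definition R1 X := tmap AA A_ABA id (fun a' => tens ABA a' 1) X.
Definition Phi := tlift A_ABA (fun a y =>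
   tlift AH (fun a' h => tens AA_H (tens AA a a') h) (galois_map ABA y)).
Definition Psi := tlift AA_H (fun x h =>
   tlift AA (fun a a' => tens A_ABA a (chiinv (tens AH a' h))) x).

Ltac unf2 := rewrite /Phi /Psi /L1 /R1 /L2 /R2 /tmap /coact_AA.

Lemma Phi_R1 X : Phi (R1 X) = R2 X.
Proof.
move: X; apply: tens_ext; unf2; try solve_lin.
by move=> a b; tEs; rewrite chiE d1 tmul_tt !mulr1; tEs.
Qed.

Lemma Psi_R2 X : Psi (R2 X) = R1 X.
Proof.
move: X; apply: tens_ext; unf2; try solve_lin.
move=> a b; tEs.
by rewrite -[tens ABA b 1]chiK chiE d1 tmul_tt !mulr1.
Qed.

Lemma Phi_L1 X : Phi (L1 X) = L2 X.
Proof.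
move: X; apply: tens_ext; unf2; try solve_lin.
move=> a b; tEs. tC. apply: tlift_ext => a0 h. tEs.
rewrite chi_rmulB /transl chiinvK tmul_tl. tC. tU.
by apply: tlift_ext => u v; rewrite mul1r.
Qed.

Lemma Psi_L2 X : Psi (L2 X) = L1 X.
Proof.
move: X; apply: tens_ext; unf2; try solve_lin.
move=> a b; tEs. tC. apply: tlift_ext => a0 h0. tC. tU.
rewrite -(tpush (g := fun z => tens A_ABA a0 (chiinv z))); try solve_lin.
rewrite /transl -[rmulB ABA b _]chiK chi_rmulB chiinvK tmul_tl.
by congr (tens A_ABA a0 (chiinv _)); apply: tlift_ext => u v; rewrite mul1r.
Qed.

Lemma main_eq X :
  (cotensor delta Sinv AH_A A_HA X <-> coinvAA delta AA_H X) /\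
  (coinvAA delta AA_H X <-> galoisC chiinv A_ABA X).
Proof.
change ((L3 X = R3 X <-> L2 X = R2 X) /\ (L2 X = R2 X <-> L1 X = R1 X)).
split; split => E.
- by rewrite -psi_L3 -psi_R3 E.
- by rewrite -psi'_L2 -psi'_R2 E.
- by rewrite -Psi_L2 -Psi_R2 E.
- by rewrite -Phi_L1 -Phi_R1 E.
Qed.

End Main.

Unset Implicit Arguments.

Theorem lemma3p3 (F : fieldType) (H A : algType F)
  (* H is a Hopf algebra (Delta, eps, S) with invertible antipode S^{-1} = Sinv *)
  (HH : tensor H H) (HH_H : tensor (tcarrier HH) H) (H_HH : tensor H (tcarrier HH))
  (Delta : H -> tcarrier HH) (eps : H -> F) (S Sinv : H -> H)
  (hopf : is_hopf HH_H H_HH Delta eps S)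
  (SK : cancel S Sinv) (SinvK : cancel Sinv S)
  (* A is a right H-comodule algebra *)
  (AH : tensor A H) (AH_H : tensor (tcarrier AH) H) (A_HH : tensor A (tcarrier HH))
  (delta : A -> tcarrier AH)
  (comod : is_comod_alg Delta eps AH_H A_HH delta)
  (* A^{coH} = B \subseteq A is H-Hopf-Galois: chi is bijective, with inverse chiinv *)
  (ABA : tensor_with (balanced delta)) (chiinv : tcarrier AH -> tcarrier ABA)
  (chiK : cancel (galois_map ABA) chiinv) (chiinvK : cancel chiinv (galois_map ABA))
  (* the remaining tensor products occurring in the statement *)
  (AA : tensor A A) (HA : tensor H A)
  (AH_A : tensor (tcarrier AH) A) (A_HA : tensor A (tcarrier HA))
  (AA_H : tensor (tcarrier AA) H) (A_ABA : tensor A (tcarrier ABA)) :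
  forall X : tcarrier AA,
    (cotensor delta Sinv AH_A A_HA X <-> coinvAA delta AA_H X) /\
    (coinvAA delta AA_H X <-> galoisC chiinv A_ABA X).
Proof.
move=> X; exact: (main_eq hopf SK SinvK comod chiK chiinvK AH_A A_HA AA_H A_ABA X).
Qed.
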